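(* Let $k\ge 1$ be an integer, $S$ a poset, and let $S\otimes_i G_i$ and $S\otimes_i H_i$ be terminating ordered joins in the same shape $S$. If $\Gamma_k(G_i)=\Gamma_k(H_i)$ for every $i\in S$, then $\Gamma_k(S\otimes_i G_i)=\Gamma_k(S\otimes_i H_i)$.
   Context: All games are impartial combinatorial games under normal play; a game is determined by its set of options, and $G \to G'$ means $G'$ is an option of $G$. A game is terminating if it admits no infinite sequence of moves. $\mathbf{0}$ denotes the game with no options. For terminating games define recursively: $\Gamma_0(G)=\operatorname{mex}\{\Gamma_0(G') : G\to G'\}$ (the Grundy number; $\operatorname{mex}\Lambda$ is the least ordinal not in the set of ordinals $\Lambda$), and for $k\ge1$, $\Gamma_k(G)=\{\Gamma_{k-1}(G') : G\to G'\}$. Ordered join: for a poset $S$ and a family $(G_i)_{i\in S}$ of games, $S \otimes_i G_i$ is the game whose options are exactly the ordered joins $S \otimes_i G'_i$ obtained by choosing one $i_0\in S$ and an option $G_{i_0}\to G'_{i_0}$, and setting $G'_i=\mathbf{0}$ for all $i>i_0$ and $G'_i=G_i$ for all other $i\ne i_0$. *)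

(* Defs.v *)
From Stdlib Require Import Arith.

Inductive Ord : Type := osup : forall (I : Type), (I -> Ord) -> Ord.

(** [osup I f] denotes the least ordinal strictly above every [f i]. *)
Fixpoint ole (a b : Ord) {struct a} : Prop :=
  match a with
  | osup A f => match b with
    | osup J g => forall i : A, exists j : J, ole (f i) (g j)
    end
  end.

Definition olt (a b : Ord) : Prop :=
  match b with osup J g => exists j : J, ole a (g j) end.

Definition oeq (a b : Ord) : Prop := ole a b /\ ole b a.

(** A game is determined
    by its (hereditary) set of options, i.e. games are taken up to
    bisimulation; every notion below is bisimulation-invariant. *)
Record Game : Type := MkGame {
  pos : Type;
  mv : pos -> pos -> Prop;
  root : pos
}.

(* ties the universe of positions to the universe of ordinal indices, so
   that Grundy values of all games are representable in [Ord] *)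
Definition pos_rank (G : Game) (f : pos G -> Ord) : Ord := osup (pos G) f.

Definition terminating (G : Game) : Prop :=
  Acc (fun y x => mv G x y) (root G).

(** * Grundy value: [grundy mv x a] means Gamma_0(x) = a, i.e.
      a = mex { Gamma_0(y) : x -> y }  (membership up to [oeq]). *)
Inductive grundy {P : Type} (m : P -> P -> Prop) : P -> Ord -> Prop :=
| grundy_intro (x : P) (a : Ord) :
    (forall y, m x y -> exists b, grundy m y b /\ ~ oeq b a) ->
    (forall c, olt c a -> exists y b, m x y /\ grundy m y b /\ oeq b c) ->
    grundy m x a.

(** For k = 0 this is equality of Grundy values; for k >= 1,
    Gamma_k(x) = { Gamma_{k-1}(x') : x -> x' } and equality of these sets
    is extensional equality, written out. *)
Fixpoint gamma_eq (k : nat) {P Q : Type} (mP : P -> P -> Prop)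
    (x : P) (mQ : Q -> Q -> Prop) (y : Q) {struct k} : Prop :=
  match k with
  | 0 => exists a b, grundy mP x a /\ grundy mQ y b /\ oeq a b
  | S k' =>
      (forall x', mP x x' -> exists y', mQ y y' /\ gamma_eq k' mP x' mQ y') /\
      (forall y', mQ y y' -> exists x', mP x x' /\ gamma_eq k' mP x' mQ y')
  end.

Definition Gamma_eq (k : nat) (G H : Game) : Prop :=
  gamma_eq k (mv G) (root G) (mv H) (root H).

(** Positions are families i |-> option (position of G_i), where [None]
    stands for the zero game 0.  A move picks i0, a move G_{i0} -> G'_{i0},
    sets components i > i0 to 0 and leaves all other components unchanged. *)
Definition slt {S : Type} (le : S -> S -> Prop) (i j : S) : Prop :=
  le i j /\ i <> j.

Definition join_mv {S : Type} (le : S -> S -> Prop) (G : S -> Game)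
    (f f' : forall i, option (pos (G i))) : Prop :=
  exists (i0 : S) (u v : pos (G i0)),
    f i0 = Some u /\ mv (G i0) u v /\ f' i0 = Some v /\
    (forall i, slt le i0 i -> f' i = None) /\
    (forall i, i <> i0 -> ~ slt le i0 i -> f' i = f i).

Definition ojoin {S : Type} (le : S -> S -> Prop) (G : S -> Game) : Game :=
  {| pos := forall i, option (pos (G i));
     mv := join_mv le G;
     root := fun i => Some (root (G i)) |}.

(* Main.v *)
Require Import Defs.
From Stdlib Require Import Arith.
From Stdlib Require Import Classical ClassicalEpsilon Eqdep Relation_Operators Transitive_Closure.

Lemma ole_refl a : ole a a.
Proof. induction a as [I f IH]; simpl; intro i; exists i; apply IH. Qed.

Lemma ole_trans a : forall b c, ole a b -> ole b c -> ole a c.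
Proof.
  induction a as [I f IH]; intros [J g] [K h]; simpl; intros H1 H2 i.
  destruct (H1 i) as [j Hj]; destruct (H2 j) as [k Hk]; exists k; eauto.
Qed.

Lemma olt_ole_trans a b c : olt a b -> ole b c -> olt a c.
Proof.
  destruct b as [J g], c as [K h]; simpl; intros [j Hj] H.
  destruct (H j) as [k Hk]; exists k; eapply ole_trans; eauto.
Qed.

Lemma ole_olt_trans a b c : ole a b -> olt b c -> olt a c.
Proof.
  destruct c as [K h]; simpl; intros H [k Hk]; exists k; eapply ole_trans; eauto.
Qed.

Lemma olt_irrefl a : ~ olt a a.
Proof.
  induction a as [I f IH]; simpl; intros [i Hi]. apply (IH i).
  apply olt_ole_trans with (osup I f); auto. simpl; exists i; apply ole_refl.
Qed.

Lemma ole_sup J (h : J -> Ord) x : (forall j, olt (h j) x) -> ole (osup J h) x.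
Proof. destruct x as [K m]; simpl; auto. Qed.

Lemma ole_total a : forall c, ole a c \/ olt c a.
Proof.
  induction a as [I f IH]; intros [J h].
  destruct (classic (forall i, exists j, ole (f i) (h j))) as [Y|N].
  - left; exact Y.
  - right. apply not_all_ex_not in N as [i Ni]. simpl. exists i.
    apply ole_sup; intro j. destruct (IH i (h j)) as [L|L]; auto.
    exfalso; apply Ni; exists j; exact L.
Qed.

Lemma trich a b : oeq a b \/ olt a b \/ olt b a.
Proof.
  destruct (ole_total a b) as [H1|H1].
  - destruct (ole_total b a) as [H2|H2]; [left; split; auto | right; left; auto].
  - right; right; auto.
Qed.

Lemma oeq_sym a b : oeq a b -> oeq b a.
Proof. intros [x y]; split; auto. Qed.
Lemma oeq_trans a b c : oeq a b -> oeq b c -> oeq a c.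
Proof. intros [x y] [z w]; split; eapply ole_trans; eauto. Qed.
Lemma olt_oeq_r a b c : olt a b -> oeq b c -> olt a c.
Proof. intros H [x _]; eapply olt_ole_trans; eauto. Qed.

Lemma grundy_inv {P} (m : P -> P -> Prop) x a : grundy m x a ->
  (forall y, m x y -> exists b, grundy m y b /\ ~ oeq b a) /\
  (forall c, olt c a -> exists y b, m x y /\ grundy m y b /\ oeq b c).
Proof. intro H; inversion H; subst; auto. Qed.

Inductive Lose {P Q} (mP : P -> P -> Prop) (mQ : Q -> Q -> Prop) (x : P) (y : Q) : Prop :=
 lose_intro :
  (forall x', mP x x' -> (exists x'', mP x' x'' /\ Lose mP mQ x'' y) \/ (exists y', mQ y y' /\ Lose mP mQ x' y')) ->
  (forall y', mQ y y' -> (exists x', mP x x' /\ Lose mP mQ x' y') \/ (exists y'', mQ y' y'' /\ Lose mP mQ x y'')) ->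
  Lose mP mQ x y.

Lemma lose_of_rel {P Q} (mP : P -> P -> Prop) (mQ : Q -> Q -> Prop) (Rel : P -> Q -> Prop)
 (hx : forall x y, Rel x y -> forall x', mP x x' -> (exists x'', mP x' x'' /\ Rel x'' y) \/ (exists y', mQ y y' /\ Rel x' y'))
 (hy : forall x y, Rel x y -> forall y', mQ y y' -> (exists x', mP x x' /\ Rel x' y') \/ (exists y'', mQ y' y'' /\ Rel x y'')) :
 forall x y, Acc (fun b a => mP a b) x -> Acc (fun b a => mQ a b) y -> Rel x y -> Lose mP mQ x y.
Proof.
  intros x y ax ay. apply Acc_clos_trans in ax. apply Acc_clos_trans in ay.
  revert y ay. induction ax as [x _ IHx]. intros y ay; induction ay as [y Hy IHy]. intro r.
  constructor.
  - intros x' mx. destruct (hx _ _ r _ mx) as [[x'' [m2 r2]] | [y' [m2 r2]]].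
    + left. exists x''. split; auto. apply IHx; auto.
      * eapply t_trans; apply t_step; eauto.
      * constructor; exact Hy.
    + right. exists y'. split; auto. apply IHx; auto. apply t_step; auto.
      apply Hy; apply t_step; auto.
  - intros y' my. destruct (hy _ _ r _ my) as [[x' [m2 r2]] | [y'' [m2 r2]]].
    + left. exists x'. split; auto. apply IHx; auto. apply t_step; auto.
      apply Hy; apply t_step; auto.
    + right. exists y''. split; auto. apply IHy; auto.
      eapply t_trans; apply t_step; eauto.
Qed.

Lemma lose_opt {P Q} (mP : P -> P -> Prop) (mQ : Q -> Q -> Prop) :
 forall x y, Acc (fun b a => mP a b) x -> Acc (fun b a => mQ a b) y -> Lose mP mQ x y ->
 (forall x', mP x x' -> Lose mP mQ x' y -> False) /\ (forall y', mQ y y' -> Lose mP mQ x y' -> False).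
Proof.
  intros x y ax; revert y; induction ax as [x Hx IHx]; intros y ay; induction ay as [y Hy IHy].
  intros L; destruct L as [L1 L2]. split.
  - intros x' m L'. destruct (L1 x' m) as [[x'' [m2 L'']] | [y' [m2 L'']]].
    + exact (proj1 (IHx x' m y (Acc_intro y Hy) L') x'' m2 L'').
    + exact (proj2 (IHx x' m y (Acc_intro y Hy) L') y' m2 L'').
  - intros y' m L'. destruct (L2 y' m) as [[x' [m2 L'']] | [y'' [m2 L'']]].
    + exact (proj1 (IHy y' m L') x' m2 L'').
    + exact (proj2 (IHy y' m L') y'' m2 L'').
Qed.

Lemma grundy_lose {P Q} (mP : P -> P -> Prop) (mQ : Q -> Q -> Prop) x y a b :
  Acc (fun b a => mP a b) x -> Acc (fun b a => mQ a b) y ->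
  grundy mP x a -> grundy mQ y b -> oeq a b -> Lose mP mQ x y.
Proof.
  intros ax ay ga gb e.
  apply (lose_of_rel mP mQ (fun x y => exists a b, grundy mP x a /\ grundy mQ y b /\ oeq a b)); auto;
    [ | | exists a, b; auto]; clear.
  - intros x y [a [b [ga [gb e]]]] x' m.
    destruct (proj1 (grundy_inv _ _ _ ga) x' m) as [c [gc nc]].
    destruct (trich c a) as [E|[L|L]]; [contradiction| |].
    + destruct (proj2 (grundy_inv _ _ _ gb) c (olt_oeq_r _ _ _ L e)) as [y' [d [my [gd ed]]]].
      right; exists y'; split; auto; exists c, d; split; auto; split; auto; apply oeq_sym; auto.
    + destruct (proj2 (grundy_inv _ _ _ gc) a L) as [x'' [d [mx [gd ed]]]].
      left; exists x''; split; auto; exists d, b; split; auto; split; auto; eapply oeq_trans; eauto.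
  - intros x y [a [b [ga [gb e]]]] y' m.
    destruct (proj1 (grundy_inv _ _ _ gb) y' m) as [c [gc nc]].
    destruct (trich c b) as [E|[L|L]]; [contradiction| |].
    + destruct (proj2 (grundy_inv _ _ _ ga) c (olt_oeq_r _ _ _ L (oeq_sym _ _ e))) as [x' [d [mx [gd ed]]]].
      left; exists x'; split; auto; exists d, c; split; auto.
    + destruct (proj2 (grundy_inv _ _ _ gc) b L) as [y'' [d [my [gd ed]]]].
      right; exists y''; split; auto; exists a, d; split; auto; split; auto;
        eapply oeq_trans; [exact e| apply oeq_sym; auto].
Qed.

Lemma lose_oeq {P Q} (mP : P -> P -> Prop) (mQ : Q -> Q -> Prop) x y a b :
  Acc (fun b a => mP a b) x -> Acc (fun b a => mQ a b) y ->
  Lose mP mQ x y -> grundy mP x a -> grundy mQ y b -> oeq a b.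
Proof.
  intros ax ay L ga gb.
  destruct (trich a b) as [E|[Lt|Lt]]; auto; exfalso.
  - destruct (proj2 (grundy_inv _ _ _ gb) a Lt) as [y' [d [my [gd ed]]]].
    apply (proj2 (lose_opt mP mQ x y ax ay L) y' my).
    apply (grundy_lose mP mQ x y' a d); auto. apply (Acc_inv ay my). apply oeq_sym; auto.
  - destruct (proj2 (grundy_inv _ _ _ ga) b Lt) as [x' [d [mx [gd ed]]]].
    apply (proj1 (lose_opt mP mQ x y ax ay L) x' mx).
    apply (grundy_lose mP mQ x' y d b); auto. apply (Acc_inv ax mx).
Qed.

Lemma grundy_exists {P} (m : P -> P -> Prop) x : Acc (fun b a => m a b) x -> exists a, grundy m x a.
Proof.
  induction 1 as [x Hx IH].
  pose (F := fun s : {y | m x y} =>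
    proj1_sig (constructive_indefinite_description _ (IH (proj1_sig s) (proj2_sig s)))).
  assert (HF : forall s, grundy m (proj1_sig s) (F s)).
  { intro s; unfold F; exact (proj2_sig (constructive_indefinite_description _ _)). }
  pose (inA := fun d => exists y b, m x y /\ grundy m y b /\ oeq b d).
  pose (a := osup {s : {y | m x y} | forall d, ole d (F s) -> inA d} (fun t => F (proj1_sig t))).
  assert (H1 : forall c, olt c a -> inA c).
  { intros c [[s Hs] Ht]; simpl in Ht; apply Hs, Ht. }
  exists a. constructor.
  - intros y my. exists (F (exist _ y my)). split; [apply (HF (exist _ y my))|]. intro E.
    assert (C : forall d, ole d (F (exist _ y my)) -> inA d).
    { intros d Hd. destruct (trich d a) as [Ed|[Ld|Ld]].
      - exists y, (F (exist _ y my)); split; auto; split; [apply (HF (exist _ y my))|].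
        eapply oeq_trans; [exact E| apply oeq_sym; auto].
      - apply H1; auto.
      - exfalso; apply (olt_irrefl a). eapply olt_ole_trans; [exact Ld|].
        eapply ole_trans; [exact Hd| exact (proj1 E)]. }
    assert (Lt : olt (F (exist _ y my)) a).
    { simpl. exists (exist _ (exist _ y my) C). simpl. apply ole_refl. }
    apply (olt_irrefl a). eapply ole_olt_trans; [exact (proj2 E)| exact Lt].
  - intros c Hc. exact (H1 c Hc).
Qed.

Lemma gamma_sym : forall k {P Q} (mP : P -> P -> Prop) (mQ : Q -> Q -> Prop) x y,
  gamma_eq k mP x mQ y -> gamma_eq k mQ y mP x.
Proof.
  induction k as [|k IH]; simpl; intros P Q mP mQ x y.
  - intros [a [b [ga [gb e]]]]; exists b, a; split; auto; split; auto; apply oeq_sym; auto.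
  - intros [A B]; split.
    + intros y' m; destruct (B y' m) as [x' [m' G]]; exists x'; split; auto.
    + intros x' m; destruct (A x' m) as [y' [m' G]]; exists y'; split; auto.
Qed.

Lemma gamma_down : forall k {P Q} (mP : P -> P -> Prop) (mQ : Q -> Q -> Prop) x y,
  Acc (fun b a => mP a b) x -> Acc (fun b a => mQ a b) y ->
  gamma_eq (S k) mP x mQ y -> gamma_eq k mP x mQ y.
Proof.
  induction k as [|k IH]; intros P Q mP mQ x y ax ay.
  - intros [A B].
    destruct (grundy_exists mP x ax) as [a ga]. destruct (grundy_exists mQ y ay) as [b gb].
    exists a, b; split; auto; split; auto.
    apply (lose_oeq mP mQ x y); auto. constructor.
    + intros x' m; destruct (A x' m) as [y' [m' [c [d [gc [gd e]]]]]].
      right; exists y'; split; auto. apply (grundy_lose mP mQ x' y' c d); auto.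
      apply (Acc_inv ax m). apply (Acc_inv ay m').
    + intros y' m; destruct (B y' m) as [x' [m' [c [d [gc [gd e]]]]]].
      left; exists x'; split; auto. apply (grundy_lose mP mQ x' y' c d); auto.
      apply (Acc_inv ax m'). apply (Acc_inv ay m).
  - intros [A B]; split.
    + intros x' m; destruct (A x' m) as [y' [m' G]]; exists y'; split; auto.
      apply IH; auto. apply (Acc_inv ax m). apply (Acc_inv ay m').
    + intros y' m; destruct (B y' m) as [x' [m' G]]; exists x'; split; auto.
      apply IH; auto. apply (Acc_inv ax m'). apply (Acc_inv ay m).
Qed.

Definition upd {T} (le : T -> T -> Prop) (G : T -> Game) (f : forall i, option (pos (G i)))
  (i0 : T) (v : pos (G i0)) : forall i, option (pos (G i)) :=
  fun i => match excluded_middle_informative (i0 = i) with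
  | left e => eq_rect i0 (fun i => option (pos (G i))) (Some v) i e
  | right _ => if excluded_middle_informative (slt le i0 i) then None else f i
  end.

Definition shape {T} (le : T -> T -> Prop) {G : T -> Game} (j : T) (f f' : forall i, option (pos (G i))) :=
  (forall l, slt le j l -> f' l = None) /\ (forall l, l <> j -> ~ slt le j l -> f' l = f l).

Lemma upd_at {T} le G f i0 v : @upd T le G f i0 v i0 = Some v.
Proof.
  unfold upd; destruct (excluded_middle_informative (i0 = i0)) as [e|n].
  - rewrite <- Eq_rect_eq.eq_rect_eq; reflexivity.
  - contradiction.
Qed.

Lemma upd_shape {T} le G f i0 v : shape le i0 f (@upd T le G f i0 v).
Proof.
  split; intros l; unfold upd.
  - intro Hl. destruct (excluded_middle_informative (i0 = l)) as [e|n].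
    + exfalso; destruct Hl; auto.
    + destruct (excluded_middle_informative (slt le i0 l)); auto; contradiction.
  - intros n1 n2. destruct (excluded_middle_informative (i0 = l)) as [e|n].
    + exfalso; auto.
    + destruct (excluded_middle_informative (slt le i0 l)); auto; contradiction.
Qed.

Lemma upd_mv {T} le G f i0 u v : f i0 = Some u -> mv (G i0) u v ->
  join_mv le G f (@upd T le G f i0 v).
Proof.
  intros E m. exists i0, u, v. split; auto; split; auto; split; [apply upd_at|].
  apply upd_shape.
Qed.

Lemma shape_trans {T} le G j (f f' f'' : forall i, option (pos (G i))) :
  @shape T le G j f f' -> shape le j f' f'' -> shape le j f f''.
Proof.
  intros [A B] [C D]; split; auto. intros l n1 n2; rewrite D, B; auto.
Qed.

Definition AccJ {T} (le : T -> T -> Prop) (G : T -> Game) f :=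
  Acc (fun b a => join_mv le G a b) f.

Lemma acc_comp {T} le G f : @AccJ T le G f -> forall i u, f i = Some u -> Acc (fun b a => mv (G i) a b) u.
Proof.
  induction 1 as [f _ IH]; intros i u E; constructor; intros v m.
  apply (IH (upd le G f i v) (upd_mv le G f i u v E m) i v (upd_at le G f i v)).
Qed.

Definition mixc {T} (le : T -> T -> Prop) k (G H : T -> Game) (f : forall i, option (pos (G i)))
  (g : forall i, option (pos (H i))) i :=
  (f i = None /\ g i = None) \/ exists u u', f i = Some u /\ g i = Some u' /\
    (gamma_eq (S k) (mv (G i)) u (mv (H i)) u' \/
     (gamma_eq k (mv (G i)) u (mv (H i)) u' /\ forall l, slt le i l -> f l = None /\ g l = None)).

Definition kc {T} k (G H : T -> Game) (f : forall i, option (pos (G i)))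
  (g : forall i, option (pos (H i))) i :=
  (f i = None /\ g i = None) \/ exists u u', f i = Some u /\ g i = Some u' /\
    gamma_eq k (mv (G i)) u (mv (H i)) u'.

Lemma mixc_sym {T} le k G H f g i : @mixc T le k G H f g i -> mixc le k H G g f i.
Proof.
  intros [[A B]|[u [u' [E1 [E2 [C|[C D]]]]]]].
  - left; auto.
  - right; exists u', u; split; auto; split; auto; left; apply gamma_sym; auto.
  - right; exists u', u; split; auto; split; auto; right; split; [apply gamma_sym; auto|].
    intros l Hl; destruct (D l Hl); auto.
Qed.

Lemma kc_sym {T} k G H f g i : @kc T k G H f g i -> kc k H G g f i.
Proof.
  intros [[A B]|[u [u' [E1 [E2 C]]]]].
  - left; auto.
  - right; exists u', u; split; auto; split; auto; apply gamma_sym; auto.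
Qed.

Lemma keep {T} le k G H f g f' g' j i : @mixc T le k G H f g i -> shape le j f f' -> shape le j g g' ->
  f j <> None -> i <> j -> mixc le k G H f' g' i.
Proof.
  intros M Sf Sg Nj nij.
  destruct (classic (slt le j i)) as [A|A].
  - left; split; [apply (proj1 Sf)|apply (proj1 Sg)]; auto.
  - unfold mixc. rewrite (proj2 Sf i nij A), (proj2 Sg i nij A).
    destruct M as [N|[u [u' [E1 [E2 [C|[C D]]]]]]]; [left; auto| |].
    + right; exists u, u'; auto.
    + right; exists u, u'; split; auto; split; auto; right; split; auto.
      intros l Hl. destruct (classic (l = j)) as [->|nl].
      * exfalso; apply Nj; apply (D j Hl).
      * destruct (classic (slt le j l)) as [B|B].
        -- split; [apply (proj1 Sf)|apply (proj1 Sg)]; auto.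
        -- rewrite (proj2 Sf l nl B), (proj2 Sg l nl B); apply D; auto.
Qed.

Lemma resp_g {T} le k G H f g f' j u u' v v' :
  (forall i, @mixc T le k G H f g i) -> f j = Some u -> g j = Some u' -> shape le j f f' ->
  f' j = Some v -> mv (H j) u' v' -> gamma_eq k (mv (G j)) v (mv (H j)) v' ->
  forall i, mixc le k G H f' (upd le H g j v') i.
Proof.
  intros M Ef Eg Sf Ef' m gm i.
  destruct (classic (i = j)) as [->|nij].
  - right; exists v, v'; split; [exact Ef'|split; [apply upd_at|right; split; [exact gm|]]].
    intros l Hl; split; [apply (proj1 Sf); auto| apply (proj1 (upd_shape le H g j v')); auto].
  - apply (keep le k G H f g f' _ j); auto. apply upd_shape. congruence.
Qed.

Lemma step0 {T} le G H f g f' : (forall i, @mixc T le 0 G H f g i) -> join_mv le G f f' ->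
  (exists f'', join_mv le G f' f'' /\ forall i, mixc le 0 G H f'' g i) \/
  (exists g', join_mv le H g g' /\ forall i, mixc le 0 G H f' g' i).
Proof.
  intros M [j [u [v [Ef [m [Ef' [Sa Sb]]]]]]].
  assert (Sf : shape le j f f') by (split; auto).
  destruct (M j) as [[N1 N2]|[u0 [u' [E1 [Eg [C|[C D]]]]]]]; [congruence| |];
    rewrite Ef in E1; injection E1 as <-.
  - destruct C as [C1 _]. destruct (C1 v m) as [v' [m' gm]].
    right; exists (upd le H g j v'); split; [eapply upd_mv; eauto|].
    eapply resp_g; eauto.
  - destruct C as [a [a' [ga [ga' eaa]]]].
    destruct (proj1 (grundy_inv _ _ _ ga) v m) as [c [gc nc]].
    destruct (trich c a) as [E|[L|L]]; [contradiction| |].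
    + destruct (proj2 (grundy_inv _ _ _ ga') c (olt_oeq_r _ _ _ L eaa)) as [v' [b [m' [gb eb]]]].
      right; exists (upd le H g j v'); split; [eapply upd_mv; eauto|].
      eapply resp_g; eauto. exists c, b; split; auto; split; auto; apply oeq_sym; auto.
    + destruct (proj2 (grundy_inv _ _ _ gc) a L) as [v'' [e [m2 [ge ee]]]].
      left; exists (upd le G f' j v''); split; [eapply upd_mv; eauto|].
      intro i. destruct (classic (i = j)) as [->|nij].
      * right; exists v'', u'; split; [apply upd_at|split; [exact Eg|right; split]].
        -- exists e, a'; split; auto; split; auto; eapply oeq_trans; eauto.
        -- intros l Hl; split; [apply (proj1 (upd_shape le G f' j v'')); auto | apply D; auto].
      * apply (keep le 0 G H f g _ g j); auto.
        -- eapply shape_trans; [exact Sf| apply upd_shape].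
        -- split; [intros l Hl; apply D; auto| auto].
        -- congruence.
Qed.

Lemma join0 {T} le G H f g : AccJ le G f -> AccJ le H g -> (forall i, @mixc T le 0 G H f g i) ->
  gamma_eq 0 (join_mv le G) f (join_mv le H) g.
Proof.
  intros aF aG M.
  assert (L : Lose (join_mv le G) (join_mv le H) f g).
  { apply (lose_of_rel _ _ (fun f g => forall i, mixc le 0 G H f g i)); [ | | exact aF | exact aG | exact M].
    - intros x y R x' m; exact (step0 le G H x y x' R m).
    - intros x y R y' m.
      destruct (step0 le H G y x y' (fun i => mixc_sym le 0 G H x y i (R i)) m)
        as [[y'' [m2 R2]]|[x' [m2 R2]]].
      + right; exists y''; split; auto; intro i; apply mixc_sym; auto.
      + left; exists x'; split; auto; intro i; apply mixc_sym; auto. }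
  destruct (grundy_exists _ f aF) as [a ga]. destruct (grundy_exists _ g aG) as [b gb].
  exists a, b; split; auto; split; auto. apply (lose_oeq _ _ f g a b aF aG L ga gb).
Qed.

Lemma dirK {T} le k G H f g f' : (forall i, @kc T (S k) G H f g i) -> join_mv le G f f' ->
  exists g', join_mv le H g g' /\ forall i, mixc le k G H f' g' i.
Proof.
  intros K [j [u [v [Ef [m [Ef' [Sa Sb]]]]]]].
  assert (Sf : shape le j f f') by (split; auto).
  destruct (K j) as [[N1 N2]|[u0 [u' [E1 [Eg C]]]]]; [congruence|];
    rewrite Ef in E1; injection E1 as <-.
  destruct C as [C1 _]. destruct (C1 v m) as [v' [m' gm]].
  exists (upd le H g j v'); split; [eapply upd_mv; eauto|].
  apply (resp_g le k G H f g f' j u u' v v'); auto.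
  intro i; destruct (K i) as [N|[w [w' [A [B C]]]]]; [left; auto|right; exists w, w'; split; auto].
Qed.

Lemma mixK {T} le k G H f g : AccJ le G f -> AccJ le H g -> (forall i, @mixc T le (S k) G H f g i) ->
  forall i, kc (S k) G H f g i.
Proof.
  intros aF aG M i. destruct (M i) as [N|[u [u' [E1 [E2 [C|[C D]]]]]]]; [left; auto| |];
    right; exists u, u'; split; auto; split; auto.
  apply gamma_down; auto; eapply acc_comp; eauto.
Qed.

Lemma mainK_step {T} le k
  (fin : forall G H f' g', AccJ le G f' -> AccJ le H g' -> (forall i, @mixc T le k G H f' g' i) ->
     gamma_eq k (join_mv le G) f' (join_mv le H) g') :
  forall G H f g, AccJ le G f -> AccJ le H g -> (forall i, @kc T (S k) G H f g i) ->
  gamma_eq (S k) (join_mv le G) f (join_mv le H) g.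
Proof.
  intros G H f g aF aG R. split.
  - intros f' m; destruct (dirK le _ G H f g f' R m) as [g' [m' M]].
    exists g'; split; auto; apply fin; auto; [apply (Acc_inv aF m)|apply (Acc_inv aG m')].
  - intros g' m; destruct (dirK le _ H G g f g' (fun i => kc_sym _ G H f g i (R i)) m) as [f' [m' M]].
    exists f'; split; auto; apply fin; [apply (Acc_inv aF m')|apply (Acc_inv aG m)|].
    intro i; apply mixc_sym; auto.
Qed.

Lemma mainK {T} le : forall k G H f g, AccJ le G f -> AccJ le H g -> (forall i, @kc T (S k) G H f g i) ->
  gamma_eq (S k) (join_mv le G) f (join_mv le H) g.
Proof.
  intro k; induction k as [|k IH]; apply mainK_step.
  - intros; apply join0; auto.
  - intros G H f g a1 a2 M; apply IH; auto; apply (mixK le); auto.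
Qed.

Theorem mainTheorem10 (k : nat) (hk : 1 <= k)
  (S : Type) (le : S -> S -> Prop)
  (le_refl : forall i, le i i)
  (le_antisym : forall i j, le i j -> le j i -> i = j)
  (le_trans : forall i j l, le i j -> le j l -> le i l)
  (G H : S -> Game)
  (termG : terminating (ojoin le G))
  (termH : terminating (ojoin le H))
  (hGH : forall i, Gamma_eq k (G i) (H i)) :
  Gamma_eq k (ojoin le G) (ojoin le H).
Proof.
  destruct k as [|k]; [inversion hk|].
  exact (mainK le k G H (fun i => Some (root (G i))) (fun i => Some (root (H i))) termG termH
    (fun i => or_intror (ex_intro _ (root (G i)) (ex_intro _ (root (H i))
       (conj eq_refl (conj eq_refl (hGH i))))))).
Qed.
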